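(* In the setting described in the context, let $(x^k)$, $(\bar x^k)$, $(\alpha_k)$ be the sequences generated by the Conceptual Algorithm (with either Method 1 or Method 2). Then for all $k$, $\alpha_k\le\alpha_{-1}$ and $$\Big\langle\frac{x^k-\bar x^k}{\alpha_k}-(A_2x^k-A_2\bar x^k),\,x^k-\bar x^k\Big\rangle\ge\frac{1-\delta}{\alpha_k}\|x^k-\bar x^k\|^2\ge0.$$
   Context: Let $\mathcal H$ be a real Hilbert space with inner product $\langle\cdot,\cdot\rangle$ and norm $\|\cdot\|$. Let $A_1:\mathcal H\to\mathcal H$ be $\beta$-cocoercive for some $\beta>0$ (i.e. $\langle A_1x-A_1y,x-y\rangle\ge\beta\|A_1x-A_1y\|^2$ for all $x,y$), let $A_2:\mathcal H\to\mathcal H$ be maximally monotone and uniformly continuous, let $B:\mathcal H\rightrightarrows\mathcal H$ be maximally monotone, and set $A:=A_1+A_2$. Assume $\operatorname{zer}(A+B):=\{x:0\in Ax+Bx\}\neq\emptyset$. $J_{\alpha B}:=(I+\alpha B)^{-1}$ for $\alpha>0$, and $P_C$ denotes the orthogonal projection onto a nonempty closed convex set $C$. Fix $\theta,\delta\in(0,1)$, $\bar\delta>0$ with $1-\delta-\bar\delta>0$, and $\alpha_{-1}>0$ with $\alpha_{-1}\le4\beta\bar\delta$. Conceptual Algorithm: pick $x^0\in\mathcal H$. Given $x^k$ and $\alpha_{k-1}$, for $j\in\mathbb N$ let $\bar x^k_j:=J_{\alpha_{k-1}\theta^jB}(x^k-\alpha_{k-1}\theta^jAx^k)$ and let $j(k)$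 be the smallest $j\in\mathbb N$ with $\alpha_{k-1}\theta^j\langle A_2x^k-A_2\bar x^k_j,x^k-\bar x^k_j\rangle\le\delta\|x^k-\bar x^k_j\|^2$. Set $\alpha_k:=\alpha_{k-1}\theta^{j(k)}$, $\bar x^k:=J_{\alpha_kB}(x^k-\alpha_kAx^k)$, $r_k:=\frac{\bar\delta}{\alpha_k}\|x^k-\bar x^k\|^2$, $T_k:=\{x\in\mathcal H:\langle \frac{x^k-\bar x^k}{\alpha_k}-(A_2x^k-A_2\bar x^k),x-\bar x^k\rangle\le r_k\}$ and $\Gamma_k:=\{x\in\mathcal H:\langle x^0-x^k,x-x^k\rangle\le0\}$. Method 1 sets $x^{k+1}:=P_{T_k}(x^k)$; Method 2 sets $x^{k+1}:=P_{T_k\cap\Gamma_k}(x^0)$. The algorithm stops if $x^{k+1}=x^k$. *)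

(* Defs.v *)
From mathcomp Require Import all_boot all_order all_algebra.
From mathcomp Require Import reals.
Set Implicit Arguments. Unset Strict Implicit. Unset Printing Implicit Defensive.
Import Order.TTheory GRing.Theory Num.Theory.
Local Open Scope ring_scope.

Section Hilbert.
Variables (R : realType) (V : lmodType R) (ip : V -> V -> R).

Definition hnorm (x : V) : R := Num.sqrt (ip x x).

Record is_hilbert : Prop := IsHilbert {
  ip_sym : forall x y, ip x y = ip y x;
  ip_linl : forall (a : R) x y z, ip (a *: x + y) z = a * ip x z + ip y z;
  ip_ge0 : forall x, 0 <= ip x x;
  ip_eq0 : forall x, ip x x = 0 -> x = 0;
  ip_complete : forall u : nat -> V,
    (forall e : R, 0 < e -> exists N : nat, forall m n : nat,
        (N <= m)%N -> (N <= n)%N -> hnorm (u m - u n) < e) ->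
    exists l : V, forall e : R, 0 < e -> exists N : nat, forall n : nat,
        (N <= n)%N -> hnorm (u n - l) < e
}.

(* set-valued operators are represented by their graphs: B x u <-> u \in B x *)
Definition monotone_op (B : V -> V -> Prop) : Prop :=
  forall x u y v, B x u -> B y v -> 0 <= ip (x - y) (u - v).

Definition maximally_monotone (B : V -> V -> Prop) : Prop :=
  monotone_op B /\
  forall x u, (forall y v, B y v -> 0 <= ip (x - y) (u - v)) -> B x u.

Definition graph_of (A : V -> V) : V -> V -> Prop := fun x u => u = A x.

Definition cocoercive (beta : R) (A : V -> V) : Prop :=
  forall x y, beta * hnorm (A x - A y) ^+ 2 <= ip (A x - A y) (x - y).

Definition uniformly_continuous_op (A : V -> V) : Prop :=
  forall e : R, 0 < e -> exists d : R, 0 < d /\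
    forall x y, hnorm (x - y) < d -> hnorm (A x - A y) < e.

(* p = J_{aB}(z) = (I + aB)^{-1} z  <->  z \in p + a B p *)
Definition is_resolvent (B : V -> V -> Prop) (a : R) (z p : V) : Prop :=
  B p (a^-1 *: (z - p)).

Definition is_proj (C : V -> Prop) (z p : V) : Prop :=
  C p /\ forall y, C y -> hnorm (z - p) <= hnorm (z - y).

End Hilbert.

(* Main.v *)
Require Import Defs.
From mathcomp Require Import all_boot all_order all_algebra.
From mathcomp Require Import reals.
From mathcomp Require Import ring lra.
Import Order.TTheory GRing.Theory Num.Theory.
Local Open Scope ring_scope.

Theorem proposition4p4
  (R : realType) (V : lmodType R) (ip : V -> V -> R)
  (A1 A2 : V -> V) (B : V -> V -> Prop)
  (beta theta delta deltab alpha_m1 : R)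
  (method2 : bool)
  (x xbar : nat -> V) (alpha : nat -> R) (j : nat -> nat) :
  is_hilbert ip ->
  0 < beta -> cocoercive ip beta A1 ->
  maximally_monotone ip (graph_of A2) -> uniformly_continuous_op ip A2 ->
  maximally_monotone ip B ->
  (exists z, B z (- (A1 z + A2 z))) ->
  0 < theta < 1 -> 0 < delta < 1 -> 0 < deltab -> 0 < 1 - delta - deltab ->
  0 < alpha_m1 -> alpha_m1 <= 4 * beta * deltab ->
  let A := fun v => A1 v + A2 v in
  let alpha_prev := fun k : nat => if k is k'.+1 then alpha k' else alpha_m1 in
  (* linesearch condition for trial step s = alpha_{k-1} theta^jj at x^k,
     with trial point  xbar^k_jj = J_{sB}(x^k - s A x^k) *)
  let ls_cond := fun (k jj : nat) =>
    let s := alpha_prev k * theta ^+ jj in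
    forall p, is_resolvent B s (x k - s *: A (x k)) p ->
      s * ip (A2 (x k) - A2 p) (x k - p) <= delta * hnorm ip (x k - p) ^+ 2 in
  (forall k, ls_cond k (j k) /\ forall jj, (jj < j k)%N -> ~ ls_cond k jj) ->
  (forall k, alpha k = alpha_prev k * theta ^+ j k) ->
  (forall k, is_resolvent B (alpha k) (x k - alpha k *: A (x k)) (xbar k)) ->
  let T := fun (k : nat) (v : V) =>
    ip ((alpha k)^-1 *: (x k - xbar k) - (A2 (x k) - A2 (xbar k))) (v - xbar k)
      <= deltab / alpha k * hnorm ip (x k - xbar k) ^+ 2 in
  let Gamma := fun (k : nat) (v : V) => ip (x 0%N - x k) (v - x k) <= 0 in
  (forall k, if method2
             then is_proj ip (fun v => T k v /\ Gamma k v) (x 0%N) (x k.+1)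
             else is_proj ip (T k) (x k) (x k.+1)) ->
  forall k,
    alpha k <= alpha_m1 /\
    (1 - delta) / alpha k * hnorm ip (x k - xbar k) ^+ 2
      <= ip ((alpha k)^-1 *: (x k - xbar k) - (A2 (x k) - A2 (xbar k)))
            (x k - xbar k) /\
    0 <= (1 - delta) / alpha k * hnorm ip (x k - xbar k) ^+ 2.
Proof.
move=> H hb hc hA2 huc hB hz /andP[th0 th1] /andP[d0 d1] db0 hdd a0 ha A alpha_prev ls_cond Hls Halpha Hres T Gamma Hproj.
have tpos : forall n, 0 < theta ^+ n /\ theta ^+ n <= 1.
  move=> n; split; [exact: exprn_gt0 | exact: exprn_ile1 (ltW th0) (ltW th1)].
have Hpos : forall k, 0 < alpha k /\ alpha k <= alpha_m1.
  elim=> [|k [IH1 IH2]].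
    rewrite Halpha /=; have [t1 t2] := tpos (j 0%N); split; nra.
  rewrite Halpha /=; have [t1 t2] := tpos (j k.+1); split; nra.
have ip0 : forall z, ip 0 z = 0.
  move=> z; have := ip_linl H 1 0 0 z; rewrite scale1r addr0 mul1r; lra.
have ipB : forall (a : R) u w z, ip (a *: u - w) z = a * ip u z - ip w z.
  move=> a u w z; rewrite ip_linl //; congr (_ + _).
  have := ip_linl H (-1) w 0 z; rewrite addr0 scaleN1r ip0 addr0; lra.
move=> k; have [apos ale] := Hpos k.
have Hl : alpha k * ip (A2 (x k) - A2 (xbar k)) (x k - xbar k)
          <= delta * hnorm ip (x k - xbar k) ^+ 2.
  have := (Hls k).1 (xbar k); rewrite /= -Halpha; apply; exact: Hres.
have hn : hnorm ip (x k - xbar k) ^+ 2 = ip (x k - xbar k) (x k - xbar k).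
  by rewrite /hnorm sqr_sqrtr // ip_ge0.
rewrite hn in Hl *; rewrite ipB.
have iapos : 0 < (alpha k)^-1 by rewrite invr_gt0.
have aia : alpha k * (alpha k)^-1 = 1 by rewrite mulfV // gt_eqF.
have P0 : 0 <= ip (x k - xbar k) (x k - xbar k) by exact: ip_ge0.
split; first by [].
set P := ip (x k - xbar k) (x k - xbar k) in Hl P0 *.
set Q := ip (A2 (x k) - A2 (xbar k)) (x k - xbar k) in Hl *.
set ia := (alpha k)^-1 in iapos aia *.
have HQ : Q <= ia * (delta * P).
  have -> : Q = ia * (alpha k * Q) by rewrite mulrA (mulrC ia) aia mul1r.
  by rewrite ler_pM2l.
rewrite /(_ / _).
split; last by apply: mulr_ge0 => //; apply: mulr_ge0; [lra | exact: ltW].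
have -> : (1 - delta) * ia * P = ia * P - ia * (delta * P) by ring.
lra.
Qed.
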